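(* Let $\beta \in \mathbb{C}\setminus\mathbb{R}$ be a root of a quadratic polynomial with integer coefficients. Then there is a nonzero polynomial $f \in \mathbb{Z}_{\geq 0}[x]$ with $f(\beta) = 0$; consequently $p_\beta(0) = \infty$, and $p_\beta(\alpha) \in \{0, \infty\}$ for every $\alpha \in \mathbb{C}$.
   Context: For $\beta, \alpha \in \mathbb{C}$, $p_\beta(\alpha) \in \mathbb{Z}_{\geq 0}\cup\{\infty\}$ is the number of polynomials $f \in \mathbb{Z}_{\geq 0}[x]$ (non-negative integer coefficients) with $f(\beta) = \alpha$. *)

(* Defs.v *)
From mathcomp Require Import all_boot all_algebra.
From mathcomp Require Import all_classical all_reals.
From mathcomp Require Import complex.
From mathcomp Require Import Rstruct.
From mathcomp Require Import finmap.
Set Implicit Arguments. Unset Strict Implicit. Unset Printing Implicit Defensive.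
Import GRing.Theory Num.Theory.
Local Open Scope ring_scope.

Definition C : numClosedFieldType := (Rdefinitions.R)[i].

Definition nonneg_poly (f : {poly int}) : Prop := forall i : nat, 0 <= f`_i.

Definition evalC (f : {poly int}) (x : C) : C := (map_poly intr f).[x].

Definition pset (beta alpha : C) : set {poly int} :=
  [set f | nonneg_poly f /\ evalC f beta = alpha].

(* p_beta(alpha) in Z_{>=0} u {oo}: Some n = finite value n, None = infinity. *)
Definition p_beta (beta alpha : C) : option nat :=
  if pselect (finite_set (pset beta alpha))
  then Some (#|` fset_set (pset beta alpha)|)%fset
  else None.

(* Main.v *)
Require Import Defs.
From mathcomp Require Import all_boot all_algebra.
From mathcomp Require Import all_classical all_reals.
From mathcomp Require Import complex.
From mathcomp Require Import Rstruct.
From mathcomp Require Import ring lra all_order zify.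
Import Order.TTheory GRing.Theory Num.Theory.
Local Open Scope ring_scope.

Lemma evalC_add f g x : evalC (f + g) x = evalC f x + evalC g x.
Proof. by rewrite /evalC rmorphD hornerD. Qed.

Lemma evalC_mulXn f k x : evalC (f * 'X^k) x = evalC f x * x ^+ k.
Proof. by rewrite /evalC rmorphM /= map_polyXn hornerM hornerXn. Qed.

Lemma pset_infinite beta alpha (f g : {poly int}) :
  f != 0 -> nonneg_poly f -> evalC f beta = 0 ->
  pset beta alpha g -> ~ finite_set (pset beta alpha).
Proof.
move=> f0 fnn fb [gnn gb] fin.
pose h := fun k : nat => g + f * 'X^k.
have hin : forall k, pset beta alpha (h k).
  move=> k; split.
    move=> i; rewrite /h coefD mulrC coefXnM.
    by apply: addr_ge0 => //; case: ifP.
  by rewrite /h evalC_add evalC_mulXn fb mul0r addr0.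
have inj : {in (h @^-1` pset beta alpha)%classic &, injective h}.
  move=> k m _ _ /addrI H; have := congr1 (fun p : {poly int} => size p) H; rewrite /=; rewrite !size_mulXn //.
  by move/addIn.
have := finite_preimage inj fin.
have pre : (h @^-1` pset beta alpha)%classic = setT.
  by apply/seteqP; split => k //= _; apply: hin.
rewrite pre; exact: infinite_nat.
Qed.

Lemma final_parts beta :
  (exists f : {poly int}, f != 0 /\ nonneg_poly f /\ evalC f beta = 0) ->
  p_beta beta 0 = None
  /\ (forall alpha : C, p_beta beta alpha = Some 0%N \/ p_beta beta alpha = None).
Proof.
move=> [f [f0 [fnn fb]]].
have key : forall alpha g, pset beta alpha g -> p_beta beta alpha = None.
  move=> alpha g hg; rewrite /p_beta; case: pselect => // fin.
  by case: (@pset_infinite beta alpha f g f0 fnn fb hg fin).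
split.
  apply: (key _ 0); split; first by move=> i; rewrite coef0.
  by rewrite /evalC rmorph0 horner0.
move=> alpha.
have [[g hg]|ne] := pselect (exists g, pset beta alpha g).
  by right; apply: key hg.
left; have E : pset beta alpha = set0.
  by apply/seteqP; split => g // hg; apply: ne; exists g.
rewrite /p_beta E; case: (pselect _) => [hf|nf] /=.
  by rewrite fset_set0.
by case: nf; exact: finite_set0.
Qed.

Local Notation RR := Rdefinitions.R.

Definition rho (z : C) : RR :=
  (complex.Im z)^+2 / ((complex.Re z)^+2 + (complex.Im z)^+2).

Lemma sqrC (x y : RR) : ((x +i* y)%C : C) ^+ 2 = ((x*x - y*y) +i* (x*y + y*x))%C.
Proof. by rewrite expr2. Qed.

Lemma rho_le1 z : rho z <= 1.
Proof.
rewrite /rho; set r := (_ + _).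
have r0 : 0 <= r by rewrite /r addr_ge0 // sqr_ge0.
have [->|rn0] := eqVneq r 0; first by rewrite invr0 mulr0.
have rp : 0 < r by rewrite lt0r rn0 r0.
rewrite ler_pdivrMr // mul1r /r lerDr sqr_ge0 //.
Qed.

Lemma rho_step z : 0 < rho z -> 0 < complex.Re (z ^+ 2) -> 2 * rho z <= rho (z ^+ 2).
Proof.
case: z => x y; rewrite sqrC /rho /=.
set r := x ^+ 2 + y ^+ 2 => hr hre.
have r0 : 0 <= r by rewrite /r addr_ge0 // sqr_ge0.
have rn0 : r != 0 by apply/eqP => r0'; move: hr; rewrite r0' invr0 mulr0 ltxx.
have rp : 0 < r by rewrite lt0r rn0 r0.
have -> : (x * x - y * y) ^+ 2 + (x * y + y * x) ^+ 2 = r ^+ 2 by rewrite /r; ring.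
rewrite ler_pdivlMr ?exprn_gt0 //.
have -> : 2 * (y ^+ 2 / r) * r ^+ 2 = 2 * y^+2 * r by field.
rewrite /r -subr_ge0.
have -> : (x * y + y * x) ^+ 2 - 2 * y ^+ 2 * (x ^+ 2 + y ^+ 2) = (2 * y ^+ 2) * (x * x - y * y) by ring.
by apply: mulr_ge0; [rewrite mulr_ge0 // sqr_ge0 | exact: ltW].
Qed.

Lemma rho_pos (beta : C) : beta \isn't Num.real -> 0 < rho beta.
Proof.
case: beta => x y; rewrite complex_real => /negP yn0.
rewrite /rho /=; apply: divr_gt0.
  by rewrite exprn_even_gt0 //; apply/negP.
rewrite ltr_pwDr ?sqr_ge0 //.
by rewrite exprn_even_gt0 //; apply/negP.
Qed.

Lemma exists_re_le0 (beta : C) : beta \isn't Num.real ->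
  exists n, (0 < n)%N /\ complex.Re (beta ^+ n) <= 0.
Proof.
move=> hnr; apply: contrapT => H.
have H' : forall n, (0 < n)%N -> 0 < complex.Re (beta ^+ n).
  move=> n n0; rewrite ltNge; apply/negP => hle; apply: H; by exists n.
have rp := rho_pos _ hnr.
have iter : forall k, (2 ^ k)%:R * rho beta <= rho (beta ^+ (2 ^ k)).
  elim => [|k IH]; first by rewrite expn0 mul1r expr1.
  have pk : 0 < rho (beta ^+ (2 ^ k)).
    apply: lt_le_trans IH; by rewrite mulr_gt0 // ltr0n expn_gt0.

  rewrite expnSr exprM natrM -mulrA (mulrC 2%:R) mulrA.
  apply: le_trans (rho_step _ pk _).
    by rewrite mulrC ler_pM2l //.
  by rewrite -exprM -expnSr; apply: H'; rewrite expn_gt0.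
pose k := Num.Def.archi_bound (rho beta)^-1.
have ip : 0 <= (rho beta)^-1 by rewrite invr_ge0 ltW.
have hk := @archi_boundP _ (rho beta)^-1 ip.
have : 1 < (2 ^ k)%:R * rho beta.
  rewrite -ltr_pdivrMr // div1r; apply: lt_le_trans hk _.
  by rewrite ler_nat ltnW // ltn_expl.
move=> h1; have := lt_le_trans h1 (le_trans (iter k) (rho_le1 _)).
by rewrite ltxx.
Qed.



Lemma quad_case (beta : C) (a b c : int) : beta \isn't Num.real -> 0 < a ->
  (a%:~R : C) * beta ^+ 2 + b%:~R * beta + c%:~R = 0 ->
  exists f : {poly int}, f != 0 /\ nonneg_poly f /\ evalC f beta = 0.
Proof.
move=> hnr a0 hq.
set A : C := a%:~R in hq *; set B : C := b%:~R in hq *; set Cc : C := c%:~R in hq *.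
set bb : C := conjc beta.
have hb : A * bb ^+ 2 + B * bb + Cc = 0.
  have := congr1 conjc hq.
  rewrite !rmorphD !rmorphM /A /B /Cc !rmorph_int rmorph0 => <-.
  by rewrite /bb expr2.
have neq : beta - bb != 0.
  apply: contra hnr; rewrite /bb; case: beta {hq hb bb} => x y.
  rewrite /= subr_eq0 complex_real eq_complex /= => /andP [_ /eqP hy].
  by apply/eqP; move: hy; lra.
have hB : B = - (A * (beta + bb)).
  have E : (beta - bb) * (A * (beta + bb) + B) =
     (A * beta ^+ 2 + B * beta + Cc) - (A * bb ^+ 2 + B * bb + Cc) by ring.
  rewrite hq hb subrr in E; move/eqP: E; rewrite mulf_eq0 (negPf neq) /=.
  by rewrite addrC addr_eq0 => /eqP.
have hC : Cc = A * (beta * bb).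
  have E : Cc = (A * beta ^+ 2 + B * beta + Cc) - (A * beta ^+ 2 + B * beta) by ring.
  rewrite hq sub0r in E.
  by rewrite E hB; ring.
have seq : forall n, exists u v : int,
    u%:~R = A ^+ n * (beta ^+ n + bb ^+ n) /\
    v%:~R = A ^+ n.+1 * (beta ^+ n.+1 + bb ^+ n.+1).
  elim => [|n [u [v [hu hv]]]].
    exists 2, (-b); split; first by rewrite !expr0 mul1r.
    by rewrite intrN -/B hB !expr1 opprK.
  exists v, (- b * v - a * c * u); split => //.
  rewrite intrB !intrM intrN -/A -/B -/Cc hu hv hB hC.
  rewrite !exprS; ring.
have [n [n0 hre]] := exists_re_le0 _ hnr.
have [u [_ [hu _]]] := seq n.
have A0 : 0 <= A by rewrite /A ler0z ltW.
have u0 : u <= 0.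
  have E : bb ^+ n = conjc (beta ^+ n) by rewrite rmorphXn.
  rewrite -(lerz0 C) hu E addcJ.
  rewrite mulr_ge0_le0 // ?exprn_ge0 //.
  rewrite mulr_ge0_le0 //.
  by rewrite -[0 : C]/((0 : Rdefinitions.R)%:C)%C lecR.
have c0 : 0 <= c.
  rewrite -(ler0z C) -/Cc hC mulr_ge0 // mulcJ_ge0 //.
pose f : {poly int} := (a ^+ n)%:P * 'X^(n + n) + (- u)%:P * 'X^n + (c ^+ n)%:P.
exists f; split; last split.
- apply/eqP => /(congr1 (fun p : {poly int} => p`_(n + n))).
  rewrite /f !coefD !coefCM !coefXn coefC coef0 eqxx mulr1.
  have -> : (n + n == n)%N = false by apply/eqP; lia.
  have -> : (n + n == 0)%N = false by apply/eqP; lia.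
  rewrite mulr0 addr0 addr0 => /eqP; rewrite expf_eq0 => /andP [_ /eqP a00].
  by move: a0; rewrite a00.
- move=> i; rewrite /f !coefD !coefCM !coefXn coefC.
  rewrite !addr_ge0 // ?mulr_ge0 ?exprn_ge0 ?ler0n ?oppr_ge0 //.
  - exact: ltW.
  - by case: (i == 0)%N => //; rewrite exprn_ge0.
- rewrite /evalC /f !rmorphD !rmorphM /= !map_polyC !map_polyXn /=.
  rewrite !hornerD !hornerCM !hornerXn hornerC.
  rewrite !rmorphXn intrN /= hu -/Cc hC -/A.
  rewrite exprD !exprMn; ring.
Qed.


Theorem proposition9 (beta : C)
  (hnr : beta \isn't Num.real)
  (hquad : exists q : {poly int}, size q = 3%N /\ root (map_poly intr q) beta) :
  (exists f : {poly int}, f != 0 /\ nonneg_poly f /\ evalC f beta = 0)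
  /\ p_beta beta 0 = None
  /\ (forall alpha : C, p_beta beta alpha = Some 0%N \/ p_beta beta alpha = None).
Proof.
have hf : exists f : {poly int}, f != 0 /\ nonneg_poly f /\ evalC f beta = 0.
  case: hquad => q [sq rq].
  have ev : (map_poly intr q).[beta] =
      (q`_2)%:~R * beta ^+ 2 + (q`_1)%:~R * beta + (q`_0)%:~R.
    rewrite horner_coef size_map_inj_poly ?sq //; last exact: intr_inj.
    rewrite !big_ord_recr big_ord0 /= !coef_map /=; ring.
  have a0 : q`_2 != 0.
    have : lead_coef q != 0 by rewrite lead_coef_eq0 -size_poly_eq0 sq.
    by rewrite lead_coefE sq.
  move/rootP: rq; rewrite ev => hq.
  have [an|ap|ae] := ltgtP (q`_2) 0; last by move: a0; rewrite ae eqxx.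
    apply: (quad_case _ (- q`_2) (- q`_1) (- q`_0) hnr).
      by rewrite oppr_gt0.
    rewrite !intrN.
    have E : - (q`_2)%:~R * beta ^+ 2 + - (q`_1)%:~R * beta + - (q`_0)%:~R
       = - ((q`_2)%:~R * beta ^+ 2 + (q`_1)%:~R * beta + (q`_0)%:~R :> C) by ring.
    by rewrite E hq oppr0.
  exact: (quad_case _ _ _ _ hnr ap hq).
split => //; exact: final_parts.
Qed.
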